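(* For all primes $p$, all integers $m,k$ and all integers $r\ge1$, $$\binom{p^rm-1}{k}(-1)^k\equiv\binom{p^{r-1}m-1}{\lfloor k/p\rfloor}(-1)^{\lfloor k/p\rfloor}\pmod{p^r}.$$
   Context: For all integers $n, k$, the binomial coefficient is defined by $\binom{n}{k} = \lim_{z \to 0} \frac{\Gamma(z+n+1)}{\Gamma(z+k+1)\Gamma(z+n-k+1)}$; this is a finite integer for all $n,k\in\mathbb{Z}$, agrees with the usual one for $n\ge0$, and satisfies $\binom{n}{k}=\binom{n}{n-k}$. $\lfloor x\rfloor$ denotes the floor function. *)

(* Defs.v *)
From HB Require Import structures.
From mathcomp Require Import all_boot all_order all_algebra.
Set Implicit Arguments. Unset Strict Implicit. Unset Printing Implicit Defensive.
Import Order.TTheory GRing.Theory Num.Theory.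
Local Open Scope ring_scope.

(* Binomial coefficient extended to all integers n, k, as the value of
   lim_{z->0} Gamma(z+n+1) / (Gamma(z+k+1) Gamma(z+n-k+1)), evaluated
   explicitly (residue computation):
   - n >= 0 : usual binomial, 0 if k < 0 or k > n;
   - n < 0, k >= 0 : (-1)^k C(k-n-1, k);
   - n < 0, k <= n : (-1)^(n-k) C(-k-1, n-k);
   - n < k < 0 : 0. *)
Definition binomZ (n k : int) : int :=
  if 0 <= n then (if 0 <= k then (binomial (absz n) (absz k))%:Z else 0)
  else if 0 <= k then (-1) ^+ absz k * (binomial (absz (k - n - 1)%R) (absz k))%:Z
  else if k <= n then (-1) ^+ absz (n - k) * (binomial (absz (- k - 1)%R) (absz (n - k)%R))%:Z
  else 0.

(* Main.v *)
Require Import Defs.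
From HB Require Import structures.
From mathcomp Require Import all_boot all_order all_algebra zify ring.
Import Order.TTheory GRing.Theory Num.Theory.
Local Open Scope ring_scope.

Lemma binomZ_rec (n : int) (k : nat) :
  binomZ n k.+1 * k.+1%:Z = binomZ n k * (n - k%:Z).
Proof.
rewrite /binomZ; case: n => [a|a] /=.
  have [lt|le] := ltnP a k.
    by rewrite !bin_small ?mul0r // ltnW.
  by rewrite subzn // -!PoszM mulnC mul_bin_left mulnC.
have -> : (k.+1 + a.+1 - 1 = (k + a).+1)%N by lia.
have -> : absz (k%:Z - Negz a - 1)%R = (k + a)%N.
  rewrite NegzE; apply/eqP; rewrite -eqz_nat; apply/eqP. 
  rewrite gez0_abs; first by rewrite !PoszD; ring.
  lia.
have h := mul_bin_diag (k + a).+1 k.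
rewrite /= in h.
rewrite -mulrA -PoszM mulnC -h NegzE PoszM exprS.
have -> : Posz (k+a).+1 = k%:Z + a%:Z + 1 by rewrite -addn1 !PoszD.
have -> : Posz a.+1 = a%:Z + 1 by rewrite -addn1 PoszD.
ring.

Qed.

Lemma Lrec (n : int) (k : nat) :
  binomZ n k.+1 * (-1) ^+ k.+1 * k.+1%:Z = binomZ n k * (-1) ^+ k * (k.+1%:Z - (n + 1)).
Proof.
transitivity ((binomZ n k.+1 * k.+1%:Z) * (-1) ^+ k.+1); first ring.
rewrite binomZ_rec exprS.
have -> : Posz k.+1 = k%:Z + 1 by rewrite -addn1 PoszD.
ring.
Qed.

Lemma binomZ0 n : binomZ n 0 = 1.
Proof. by rewrite /binomZ; case: n => a //=; rewrite bin0. Qed.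

Fixpoint Aseq (p : nat) (k : nat) : int :=
  match k with 0 => 1 | k'.+1 => if (p %| k'.+1)%N then Aseq p k' else Aseq p k' * k'.+1%:Z end.
Fixpoint Bseq (p : nat) (c : int) (k : nat) : int :=
  match k with 0 => 1 | k'.+1 => if (p %| k'.+1)%N then Bseq p c k' else Bseq p c k' * (k'.+1%:Z - c) end.

Lemma inv (p r : nat) (m : int) : prime p -> (1 <= r)%N -> forall k : nat,
  binomZ ((p ^ r)%N%:Z * m - 1) k * (-1) ^+ k * Aseq p k =
  Bseq p ((p ^ r)%N%:Z * m) k * (binomZ ((p ^ r.-1)%N%:Z * m - 1) (k %/ p)%N * (-1) ^+ (k %/ p)%N).
Proof.
move=> pp r1; have p0 : (0 < p)%N by apply: prime_gt0.
have Pe : (p ^ r)%N%:Z = p%:Z * (p ^ r.-1)%N%:Z.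
  by rewrite -PoszM -expnS prednK.
elim=> [|k IH]; first by rewrite div0n expr0 !mulr1 mul1r !binomZ0.
rewrite divnS //=.
case: ifP => hd /=.
  have ek : k.+1 = ((k %/ p).+1 * p)%N by rewrite -(divnK hd) divnS // hd.
  have nz : k.+1%:Z != 0 by [].
  apply: (mulIf nz); rewrite add1n.
  set q := (k %/ p)%N.
  have h1 := Lrec ((p ^ r)%N%:Z * m - 1) k.
  have h2 := Lrec ((p ^ r.-1)%N%:Z * m - 1) q.
  transitivity (binomZ ((p ^ r)%N%:Z * m - 1) k.+1 * (-1) ^+ k.+1 * k.+1%:Z * Aseq p k).
    ring.
  rewrite h1.
  transitivity (binomZ ((p ^ r)%N%:Z * m - 1) k * (-1) ^+ k * Aseq p k * (k.+1%:Z - ((p ^ r)%N%:Z * m - 1 + 1))).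
    ring.
  rewrite IH.
  transitivity (Bseq p ((p ^ r)%N%:Z * m) k * (binomZ ((p ^ r.-1)%N%:Z * m - 1) q * (-1) ^+ q * (q.+1%:Z - ((p ^ r.-1)%N%:Z * m - 1 + 1))) * p%:Z).
    rewrite ek PoszM Pe.
    have -> : Posz q.+1 = q%:Z + 1 by rewrite -addn1 PoszD.
    ring.
  rewrite -h2 ek PoszM; ring.
rewrite add0n.
set q := (k %/ p)%N.
have h1 := Lrec ((p ^ r)%N%:Z * m - 1) k.
transitivity (binomZ ((p ^ r)%N%:Z * m - 1) k.+1 * (-1) ^+ k.+1 * k.+1%:Z * Aseq p k).
  ring.
rewrite h1.
transitivity (binomZ ((p ^ r)%N%:Z * m - 1) k * (-1) ^+ k * Aseq p k * (k.+1%:Z - ((p ^ r)%N%:Z * m - 1 + 1))).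
  ring.
rewrite IH; ring.
Qed.

Lemma BA (p : nat) (P : int) (m : int) k : (P %| Bseq p (P * m) k - Aseq p k)%Z.
Proof.
elim: k => [|k IH] /=; first by rewrite subrr dvdz0.
case: ifP => _ //.
have -> : Bseq p (P * m) k * (k.+1%:Z - P * m) - Aseq p k * k.+1%:Z
   = (Bseq p (P * m) k - Aseq p k) * k.+1%:Z - P * (m * Bseq p (P * m) k) by ring.
apply: rpredB; first exact: dvdz_mulr.
exact: dvdz_mulr (dvdzz P).
Qed.

Lemma Acop (p : nat) k : prime p -> ~~ (p %| absz (Aseq p k))%N.
Proof.
move=> pp; elim: k => [|k IH] /=; first by rewrite dvdn1; apply/eqP => e; rewrite e in pp.
case: ifP => hd //.
by rewrite abszM Euclid_dvdM // negb_or IH /= hd.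
Qed.

Lemma key (p r : nat) (m : int) (k : nat) : prime p -> (1 <= r)%N ->
  (binomZ ((p ^ r)%N%:Z * m - 1) k * (-1) ^+ k =
   binomZ ((p ^ r.-1)%N%:Z * m - 1) (k %/ p)%N * (-1) ^+ (k %/ p)%N %[mod (p ^ r)%N%:Z])%Z.
Proof.
move=> pp r1; apply/eqP; rewrite eqz_mod_dvd.
have hi := @inv p r m pp r1 k.
set L := binomZ _ k * _ in hi *.
set R := binomZ _ _ * _ in hi *.
have cop : coprimez (p ^ r)%N%:Z (Aseq p k).
  by rewrite coprimezE /= coprimeXl // prime_coprime // Acop.
rewrite -(Gauss_dvdzl _ cop).
have -> : (L - R) * Aseq p k = (Bseq p ((p ^ r)%N%:Z * m) k - Aseq p k) * R.
  rewrite mulrBl hi; ring.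
exact/dvdz_mulr/BA.
Qed.

Definition sg (x : int) : int := (-1) ^+ absz x.

Lemma sgN x : sg (- x) = sg x.
Proof. by rewrite /sg abszN. Qed.

Lemma sg2 x : sg x * sg x = 1.
Proof. by rewrite -expr2 sqrr_sign. Qed.

Lemma sg1 x : sg (x + 1) = - sg x.
Proof.
rewrite /sg; case: x => n.
  have -> : Posz n + 1 = Posz n.+1 by rewrite -addn1 PoszD.
  by rewrite /= exprS mulN1r.
rewrite NegzE.
have -> : - Posz n.+1 + 1 = - Posz n by rewrite -addn1 PoszD; ring.
by rewrite !abszN /= exprS mulN1r opprK.
Qed.

Lemma sgD x y : sg (x + y) = sg x * sg y.
Proof.
have hp : forall n : nat, sg (x + n%:Z) = sg x * sg n.
  elim=> [|n IH]; first by rewrite addr0 /sg expr0 mulr1.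
  have -> : x + n.+1%:Z = (x + n%:Z) + 1 by rewrite -addn1 PoszD addrA.
  rewrite sg1 IH.
  have -> : Posz n.+1 = n%:Z + 1 by rewrite -addn1 PoszD.
  by rewrite sg1 mulrN.
have hn : forall n : nat, sg (x - n%:Z) = sg x * sg n.
  elim=> [|n IH]; first by rewrite subr0 /sg expr0 mulr1.
  have e : x - n%:Z = (x - n.+1%:Z) + 1 by rewrite -addn1 PoszD; ring.
  have := sg1 (x - n.+1%:Z); rewrite -e IH => h.
  have -> : sg (x - n.+1%:Z) = - (sg x * sg n) by rewrite h opprK.
  have -> : Posz n.+1 = n%:Z + 1 by rewrite -addn1 PoszD.
  by rewrite sg1 mulrN.
case: y => n; first exact: hp.
rewrite NegzE hn sgN //.
Qed.

Lemma sg_even t : sg (t + t) = 1.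
Proof. by rewrite sgD sg2. Qed.

Lemma two_dvd_1sg x : (2 %| 1 - sg x)%Z.
Proof.
by rewrite /sg -signr_odd; case: (odd _).
Qed.

Lemma binomZ_k0 (n k : int) : 0 <= n -> k < 0 -> binomZ n k = 0.
Proof. by move=> hn hk; rewrite /binomZ hn leNgt hk. Qed.

Lemma binomZ_gap (n k : int) : n < 0 -> k < 0 -> n < k -> binomZ n k = 0.
Proof. by move=> hn hk hnk; rewrite /binomZ !leNgt hn hk hnk. Qed.

Lemma binomZ_sym (n k : int) : n < 0 -> k <= n -> binomZ n k = binomZ n (n - k).
Proof.
move=> hn hkn; have hk : k < 0 by apply: le_lt_trans hn.
have h0 : 0 <= n - k by rewrite subr_ge0.
rewrite /binomZ !leNgt hn hk /= -!leNgt hkn h0.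
by have -> : n - k - n - 1 = - k - 1 by ring.
Qed.

Lemma binomZ_m1 (k : int) : k < 0 -> binomZ (-1) k * sg k = -1.
Proof.
move=> hk; rewrite /binomZ !leNgt hk /=.
have -> : (-1 < k) = false by apply/negbTE; rewrite -leNgt -ltzD1 addNr.
rewrite /= (_ : - k - 1 = -1 - k); last by ring.
rewrite binn mulr1.
have -> : (-1) ^+ `|(-1 - k)%R| = sg (-1 - k) by [].
by rewrite -sgD (_ : -1 - k + k = -1) //; ring.
Qed.

Lemma final (P X Y N M k q : int) :
  (X * sg (N - k) = Y * sg (M - q) %[mod P])%Z -> (P = 2 \/ sg (N + M) = 1) ->
  (X * sg k = Y * sg q %[mod P])%Z.
Proof.
move/eqP; rewrite eqz_mod_dvd => H hP; apply/eqP; rewrite eqz_mod_dvd.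
have ek : sg k = sg N * sg (N - k) by rewrite sgD sgN mulrA sg2 mul1r.
have eq : sg q = sg M * sg (M - q) by rewrite sgD sgN mulrA sg2 mul1r.
have eM : sg M = sg N * sg (N + M) by rewrite sgD mulrA sg2 mul1r.
rewrite ek eq eM.
have -> : X * (sg N * sg (N - k)) - Y * (sg N * sg (N + M) * sg (M - q)) =
  sg N * (X * sg (N - k) - Y * sg (M - q)) + (Y * sg (M - q) * sg N) * (1 - sg (N + M)) by ring.
apply: rpredD; first exact: dvdz_mull.
apply: dvdz_mull; case: hP => [->|->]; first exact: two_dvd_1sg.
by rewrite subrr dvdz0.
Qed.

Lemma parity (p r : nat) (m : int) : prime p -> (1 <= r)%N ->
  (p ^ r)%N%:Z = 2 \/ sg (((p ^ r)%N%:Z * m - 1) + ((p ^ r.-1)%N%:Z * m - 1)) = 1.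
Proof.
move=> pp r1.
have Pe : (p ^ r)%N%:Z = p%:Z * (p ^ r.-1)%N%:Z by rewrite -PoszM -expnS prednK.
case: (even_prime pp) => [p2|po].
  move: r1 Pe; rewrite p2; case: r => [|[|r']] // _ Pe; first by left.
  right; rewrite Pe /=.
  have -> : (2 ^ r'.+1)%N%:Z = 2 * (2 ^ r')%N%:Z by rewrite expnS PoszM.
  move: (Posz (2 ^ r')%N) => X.
  rewrite (_ : 2%:Z * (2 * X) * m - 1 + (2 * X * m - 1) = (3 * X * m - 1) + (3 * X * m - 1)); last by ring.
  exact: sg_even.
right; rewrite Pe.
have -> : p%:Z = 2 * (p./2)%:Z + 1.
  rewrite -{1}(odd_double_half p) po /=; lia.
move: (Posz (p ^ r.-1)%N) (Posz p./2) => X u.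
rewrite (_ : (2 * u + 1) * X * m - 1 + (X * m - 1) = ((u + 1) * X * m - 1) + ((u + 1) * X * m - 1)); last by ring.
exact: sg_even.
Qed.

Theorem lemma5p4 (p : nat) (m k : int) (r : nat) :
  prime p -> (1 <= r)%N ->
  (binomZ ((p ^ r)%N%:Z * m - 1) k * (-1) ^+ absz k
     = binomZ ((p ^ r.-1)%N%:Z * m - 1) (k %/ p%:Z)%Z * (-1) ^+ absz (k %/ p%:Z)%Z
     %[mod (p ^ r)%N%:Z])%Z.
Proof.
move=> pp r1.
have pos : forall k : int, 0 <= k ->
  (binomZ ((p ^ r)%N%:Z * m - 1) k * (-1) ^+ absz k
     = binomZ ((p ^ r.-1)%N%:Z * m - 1) (k %/ p%:Z)%Z * (-1) ^+ absz (k %/ p%:Z)%Z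
     %[mod (p ^ r)%N%:Z])%Z.
  by case=> // kn _; rewrite divz_nat /=; exact: key.
case: (lerP 0 k) => hk; first exact: pos.
have p0 : 0 < p%:Z by rewrite ltz_nat prime_gt0.
have hq : (k %/ p%:Z)%Z < 0 by rewrite ltNge divz_ge0 // -ltNge.
have Pe : (p ^ r)%N%:Z = p%:Z * (p ^ r.-1)%N%:Z by rewrite -PoszM -expnS prednK.
have Q0 : 0 < (p ^ r.-1)%N%:Z by rewrite ltz_nat expn_gt0 prime_gt0.
have P0 : 0 < (p ^ r)%N%:Z by rewrite Pe mulr_gt0.
case: (ltrgtP m 0) => hm.
- have hPm : (p ^ r)%N%:Z * m < 0 by rewrite pmulr_rlt0.
  have hQm : (p ^ r.-1)%N%:Z * m < 0 by rewrite pmulr_rlt0.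
  have hN : (p ^ r)%N%:Z * m - 1 < 0 by lia.
  have hM : (p ^ r.-1)%N%:Z * m - 1 < 0 by lia.
  case: (lerP k ((p ^ r)%N%:Z * m - 1)) => hkN.
    set N := (p ^ r)%N%:Z * m - 1 in hN hkN *.
    set M := (p ^ r.-1)%N%:Z * m - 1 in hM *.
    set q := (k %/ p%:Z)%Z in hq *.
    have hqM : q <= M.
      rewrite -ltzD1 ltz_divLR // /M.
      have -> : ((p ^ r.-1)%N%:Z * m - 1 + 1) * p%:Z = N + 1 by rewrite /N Pe; ring.
      by rewrite ltzD1.
    have ek : ((N - k) %/ p%:Z)%Z = M - q.
      have e : N - k = (M - q) * p%:Z + (p%:Z - 1 - (k %% p%:Z)%Z).
        rewrite {1}(divz_eq k p%:Z) -/q /N /M Pe; ring.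
      have h1 := modz_ge0 k (lt0r_neq0 p0).
      have h2 := ltz_pmod k p0.
      rewrite e divzMDl ?lt0r_neq0 // divz_small ?addr0 //.
      apply/andP; split; lia.
    rewrite (binomZ_sym _ _ hN hkN) (binomZ_sym _ _ hM hqM).
    have := pos (N - k); rewrite subr_ge0 => /(_ hkN); rewrite ek => H.
    exact: (final _ _ _ _ _ _ _ H (parity _ _ m pp r1)).
  rewrite (binomZ_gap _ _ hN hk hkN) (@binomZ_gap _ (k %/ p%:Z)%Z hM hq) ?mul0r //.
  rewrite -lezD1 lez_divRL //.
  have -> : ((p ^ r.-1)%N%:Z * m - 1 + 1) * p%:Z = (p ^ r)%N%:Z * m - 1 + 1 by rewrite Pe; ring.
  by rewrite lezD1.
- have hN : 0 <= (p ^ r)%N%:Z * m - 1.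
    have : 0 < (p ^ r)%N%:Z * m by rewrite mulr_gt0.
    lia.
  have hM : 0 <= (p ^ r.-1)%N%:Z * m - 1.
    have : 0 < (p ^ r.-1)%N%:Z * m by rewrite mulr_gt0.
    lia.
  by rewrite (binomZ_k0 _ _ hN hk) (binomZ_k0 _ _ hM hq) !mul0r.
- rewrite hm !mulr0 sub0r.
  have e1 := binomZ_m1 _ hk; have e2 := binomZ_m1 _ hq.
  rewrite /sg in e1 e2; by rewrite e1 e2.
Qed.
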